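(* There is an absolute constant $C$ such that the following holds. Let $\sigma\in(0,1]$ and let $\mathcal{I}$ be a finite set of closed intervals on the real line that all contain a common point $p$. If $\mathcal{I}$ is $\sigma$-exposed, then $|\mathcal{I}|\le C/\sigma^2$.
   Context: For sets $X, Y\subseteq\mathbb{R}^d$ and $\sigma>0$, $X$ $\sigma$-shadows $Y$ if $\max_{q\in Y} \mathrm{dist}(q, X) \le \sigma\cdot \mathrm{diam}(Y)$, where $\mathrm{dist}(q,X)=\min_{p\in X}\|q-p\|$. A set of objects is $\sigma$-exposed if no object in the set $\sigma$-shadows another (distinct) object of the set. For intervals, $I=[\ell,r]$ $\sigma$-shadows $I'$ iff $I'\subseteq[\ell-\sigma|I'|,\, r+\sigma|I'|]$, where $|I'|$ is the length of $I'$. *)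

(* Defs.v *)
From Stdlib Require Import Reals List.
Open Scope R_scope.

Definition interval := (R * R)%type.
Definition ileft (I : interval) : R := fst I.
Definition iright (I : interval) : R := snd I.
Definition is_interval (I : interval) : Prop := ileft I <= iright I.
Definition ilen (I : interval) : R := iright I - ileft I.
Definition icontains (I : interval) (x : R) : Prop := ileft I <= x <= iright I.

Definition shadows (sigma : R) (I J : interval) : Prop :=
  ileft I - sigma * ilen J <= ileft J /\ iright J <= iright I + sigma * ilen J.

Definition exposed (sigma : R) (S : list interval) : Prop :=
  forall I J, In I S -> In J S -> I <> J -> ~ shadows sigma I J.

(* Main.v *)
Require Import Defs.
From Stdlib Require Import Reals List Lra Lia ZArith Classical.
Open Scope R_scope.

Definition tpos (p : R) (I : interval) : R :=
  if Req_EM_T (ilen I) 0 then 0 else (p - ileft I) / ilen I.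

Definition bucket (sigma p : R) (I : interval) : Z :=
  Int_part (2 * tpos p I / sigma).

Lemma tpos_bounds p I : is_interval I -> icontains I p ->
  0 <= tpos p I <= 1 /\ (ilen I <> 0 -> p - ileft I = tpos p I * ilen I).
Proof.
  unfold tpos, is_interval, icontains, ilen; intros H1 [H2 H3].
  destruct (Req_EM_T (iright I - ileft I) 0) as [e|n].
  - split; [lra| intros; contradiction].
  - assert (Hp : iright I - ileft I > 0) by lra.
    split.
    + split.
      * apply Rmult_le_pos; [lra| left; apply Rinv_0_lt_compat; lra].
      * apply (Rmult_le_reg_r (iright I - ileft I)); [lra|].
        unfold Rdiv; rewrite Rmult_assoc, Rinv_l by lra; lra.
    + intros _. field. lra.
Qed.

Lemma shadow_close sigma p I J :
  0 < sigma -> is_interval I -> icontains I p -> is_interval J -> icontains J p ->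
  ilen J <= ilen I -> ilen J <> 0 ->
  tpos p J <= tpos p I + sigma / 2 -> tpos p I <= tpos p J + sigma / 2 ->
  shadows sigma I J.
Proof.
  intros Hs HI HIp HJ HJp Hle HJ0 h1 h2.
  destruct (tpos_bounds p I HI HIp) as [[t0 t1] eI].
  destruct (tpos_bounds p J HJ HJp) as [[u0 u1] eJ].
  assert (HI0 : ilen I <> 0).
  { unfold ilen, is_interval in *. intro. apply HJ0. unfold ilen. lra. }
  specialize (eI HI0). specialize (eJ HJ0).
  assert (LJ : ilen J >= 0) by (unfold ilen, is_interval in *; lra).
  set (t := tpos p I) in *. set (u := tpos p J) in *.
  assert (a1 : t * ilen J <= t * ilen I) by (apply Rmult_le_compat_l; lra).
  assert (a2 : u * ilen J <= (t + sigma/2) * ilen J) by (apply Rmult_le_compat_r; lra).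
  assert (a3 : (1-t) * ilen J <= (1-t) * ilen I) by (apply Rmult_le_compat_l; lra).
  assert (a4 : (1-u) * ilen J <= (1-t + sigma/2) * ilen J) by (apply Rmult_le_compat_r; lra).
  unfold shadows. unfold ilen in *. split; nra.
Qed.

Lemma shadow_deg sigma p I J : is_interval I -> icontains I p ->
  is_interval J -> icontains J p -> ilen J = 0 -> shadows sigma I J.
Proof.
  unfold is_interval, icontains, shadows, ilen; intros; rewrite H3; lra.
Qed.

Lemma bucket_eq sigma p I J : 0 < sigma -> bucket sigma p I = bucket sigma p J ->
  tpos p J <= tpos p I + sigma / 2 /\ tpos p I <= tpos p J + sigma / 2.
Proof.
  unfold bucket; intros Hs E.
  destruct (base_Int_part (2 * tpos p I / sigma)) as [a b].
  destruct (base_Int_part (2 * tpos p J / sigma)) as [c d].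
  rewrite E in a, b.
  assert (x : 2 * tpos p I / sigma - 2 * tpos p J / sigma < 1) by lra.
  assert (y : 2 * tpos p J / sigma - 2 * tpos p I / sigma < 1) by lra.
  assert (x' : tpos p I - tpos p J < sigma / 2).
  { replace (tpos p I - tpos p J) with ((2 * tpos p I / sigma - 2 * tpos p J / sigma) * (sigma/2)) by (field; lra).
    replace (sigma/2) with (1 * (sigma/2)) at 2 by ring.
    apply Rmult_lt_compat_r; lra. }
  assert (y' : tpos p J - tpos p I < sigma / 2).
  { replace (tpos p J - tpos p I) with ((2 * tpos p J / sigma - 2 * tpos p I / sigma) * (sigma/2)) by (field; lra).
    replace (sigma/2) with (1 * (sigma/2)) at 2 by ring.
    apply Rmult_lt_compat_r; lra. }
  lra.
Qed.

Theorem mainTheorem4 :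
  exists C : R,
    forall (sigma : R) (S : list interval) (p : R),
      0 < sigma <= 1 ->
      NoDup S ->
      (forall I, In I S -> is_interval I) ->
      (forall I, In I S -> icontains I p) ->
      exposed sigma S ->
      INR (length S) <= C / (sigma ^ 2).
Proof.
  exists 3. intros sigma S p [Hs Hs1] ND Hint Hcont Hexp.
  set (f := fun I => Z.to_nat (bucket sigma p I)).
  set (M := Z.to_nat (up (2 / sigma))).
  assert (Hinj : ForallPairs (fun x y => f x = f y -> x = y) S).
  { intros I J HI HJ E.
    destruct (classic (I = J)) as [e|n]; [exact e|]. exfalso.
    assert (bI : (0 <= bucket sigma p I)%Z).
    { unfold bucket. destruct (base_Int_part (2 * tpos p I / sigma)) as [_ b].
      destruct (tpos_bounds p I (Hint I HI) (Hcont I HI)) as [[t0 _] _].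
      assert (0 <= 2 * tpos p I / sigma) by (unfold Rdiv; apply Rmult_le_pos; [lra| left; apply Rinv_0_lt_compat; lra]).
      assert (IZR (Int_part (2 * tpos p I / sigma)) > -1) by lra.

      assert (-1 < Int_part (2 * tpos p I / sigma))%Z by (apply lt_IZR; lra). lia. }
    assert (bJ : (0 <= bucket sigma p J)%Z).
    { unfold bucket. destruct (base_Int_part (2 * tpos p J / sigma)) as [_ b].
      destruct (tpos_bounds p J (Hint J HJ) (Hcont J HJ)) as [[t0 _] _].
      assert (0 <= 2 * tpos p J / sigma) by (unfold Rdiv; apply Rmult_le_pos; [lra| left; apply Rinv_0_lt_compat; lra]).
      assert (-1 < Int_part (2 * tpos p J / sigma))%Z by (apply lt_IZR; lra). lia. }
    assert (Eb : bucket sigma p I = bucket sigma p J) by (unfold f in E; lia).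
    destruct (bucket_eq sigma p I J Hs Eb) as [h1 h2].
    pose proof (Hint I HI). pose proof (Hint J HJ). pose proof (Hcont I HI). pose proof (Hcont J HJ).
    destruct (Req_EM_T (ilen J) 0) as [z|nz].
    { apply (Hexp I J HI HJ n). apply shadow_deg with p; auto. }
    destruct (Req_EM_T (ilen I) 0) as [z'|nz'].
    { apply (Hexp J I HJ HI (fun e => n (eq_sym e))). apply shadow_deg with p; auto. }
    destruct (Rle_dec (ilen J) (ilen I)) as [le|gt].
    - apply (Hexp I J HI HJ n). apply shadow_close with p; auto.
    - apply (Hexp J I HJ HI (fun e => n (eq_sym e))). apply shadow_close with p; auto; lra. }
  assert (ND' := NoDup_map_NoDup_ForallPairs f Hinj ND).
  destruct (archimed (2 / sigma)) as [u1 u2].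
  assert (Hpos : 0 < 2 / sigma) by (unfold Rdiv; apply Rmult_lt_0_compat; [lra| apply Rinv_0_lt_compat; lra]).
  assert (upos : (0 < up (2 / sigma))%Z) by (apply lt_IZR; lra).
  assert (Hincl : incl (map f S) (seq 0 M)).
  { intros k Hk. apply in_map_iff in Hk. destruct Hk as [I [<- HI]].
    apply in_seq. unfold f, M, bucket.
    destruct (tpos_bounds p I (Hint I HI) (Hcont I HI)) as [[t0 t1] _].
    destruct (base_Int_part (2 * tpos p I / sigma)) as [a b].
    assert (2 * tpos p I / sigma <= 2 / sigma).
    { unfold Rdiv. apply Rmult_le_compat_r; [left; apply Rinv_0_lt_compat; lra| lra]. }
    assert (Int_part (2 * tpos p I / sigma) < up (2 / sigma))%Z by (apply lt_IZR; lra).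
    lia. }
  pose proof (NoDup_incl_length ND' Hincl) as L.
  rewrite length_map, length_seq in L.
  apply le_INR in L.
  assert (INR M = IZR (up (2 / sigma))).
  { unfold M. rewrite INR_IZR_INZ, Z2Nat.id by lia. reflexivity. }
  assert (3 / sigma <= 3 / sigma ^ 2).
  { unfold Rdiv. apply Rmult_le_compat_l; [lra|]. apply Rinv_le_contravar.
    - nra.
    - simpl. nra. }
  assert (2 / sigma + 1 <= 3 / sigma).
  { assert (1 <= 1 / sigma).
    { apply (Rmult_le_reg_r sigma); [lra|]. unfold Rdiv. rewrite Rmult_assoc, Rinv_l by lra. lra. }
    replace (3 / sigma) with (2/sigma + 1/sigma) by (field; lra). lra. }
  lra.
Qed.
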